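(* Let $m,k$ be positive integers with $\gcd(k,m)=1$ and $m$ odd, and let $\pi(x)=x^{2^k+1}$ on $\mathbb{F}_{2^m}$. Then for all $(a_1,a_2),(b_1,b_2)\in\mathbb{F}_{2^m}\times\mathbb{F}_{2^m}$, the identities \[\pi(x)+\pi(x+a_2)+\pi(x+b_2)+\pi(x+a_2+b_2)=0,\qquad {\rm Tr}_1^m\bigl(a_1\pi(x+a_2)+b_1\pi(x+b_2)+(a_1+b_1)\pi(x+a_2+b_2)\bigr)=0\] hold for all $x\in\mathbb{F}_{2^m}$ if and only if one of the following holds: $(a_1,a_2)=(0,0)$, $(b_1,b_2)=(0,0)$, $(a_1,a_2)=(b_1,b_2)$, or $a_2=b_2=0$.
   Context: ${\rm Tr}_1^m$ denotes the absolute trace from $\mathbb{F}_{2^m}$ to $\mathbb{F}_2$. *)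

(* Defs.v *)
From mathcomp Require Import all_boot all_order all_algebra all_field.
Set Implicit Arguments. Unset Strict Implicit. Unset Printing Implicit Defensive.
Import GRing.Theory.
Local Open Scope ring_scope.

Definition absTr (F : finFieldType) (m : nat) (x : F) : F :=
  \sum_(i < m) x ^+ (2 ^ i)%N.

Definition gold (F : finFieldType) (k : nat) (x : F) : F := x ^+ (2 ^ k).+1.

(* Main.v *)
Require Import Defs.
From mathcomp Require Import all_boot all_order all_algebra all_field.
From mathcomp Require Import zify ring.
Import GRing.Theory.
Local Open Scope ring_scope.

Lemma ch2 {F : finFieldType} m : #|F| = (2 ^ m)%N -> (2%N \in [pchar F]).
Proof. by move=> h; apply: (@card_finPcharP F 2 m h isT). Qed.

Lemma two0 {F : finFieldType} m : #|F| = (2 ^ m)%N -> (2%:R : F) = 0.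
Proof. by move=> h; have /andP[_ /eqP] := ch2 m h. Qed.

Lemma frobD {F : finFieldType} m n (x y : F) : #|F| = (2 ^ m)%N ->
  (x + y) ^+ (2 ^ n) = x ^+ (2 ^ n) + y ^+ (2 ^ n).
Proof.
move=> h; apply: exprDn_pchar.
by rewrite pnatX (pnatE _ (isT : prime 2)) (ch2 m h).
Qed.

Lemma fixm {F : finFieldType} m n (x : F) : #|F| = (2 ^ m)%N ->
  x ^+ (2 ^ (m * n)) = x.
Proof.
move=> h; elim: n => [|n IH]; first by rewrite muln0 expr1.
by rewrite mulnS expnD exprM -h expf_card IH.
Qed.

Lemma fixit {F : finFieldType} k n (z : F) : z ^+ (2 ^ k) = z ->
  z ^+ (2 ^ (k * n)) = z.
Proof.
move=> h; elim: n => [|n IH]; first by rewrite muln0 expr1.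
by rewrite mulnS expnD exprM h IH.
Qed.

Lemma fix01 {F : finFieldType} {m} k (z : F) : #|F| = (2 ^ m)%N ->
  (0 < m)%N -> coprime k m -> z ^+ (2 ^ k) = z -> z = 0 \/ z = 1.
Proof.
move=> h hm hc hz.
have [a _ ha] := Bezoutl k hm.
move: hc; rewrite /coprime gcdnC => /eqP g1; rewrite g1 in ha.
have e : (1 + a * k = m * ((1 + a * k) %/ m))%N.
  by rewrite [RHS]mulnC divnK.
have z2 : z ^+ 2 = z.
  have := fixm m ((1 + a * k) %/ m) z h; rewrite -e expnD expn1 exprM.
  by rewrite exprAC [(a * k)%N]mulnC (fixit k a z hz).
have : z * (z - 1) = 0 by rewrite mulrBr mulr1 -expr2 z2 subrr.
by move/eqP; rewrite mulf_eq0 subr_eq0 => /orP[/eqP|/eqP]; [left|right].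
Qed.

Lemma TrD {F : finFieldType} {m} (x y : F) : #|F| = (2 ^ m)%N ->
  absTr m (x + y) = absTr m x + absTr m y.
Proof.
move=> h; rewrite /absTr -big_split /=; apply: eq_bigr => i _.
exact: frobD h.
Qed.

Lemma Tr0 {F : finFieldType} m : absTr m (0 : F) = 0.
Proof.
rewrite /absTr big1 // => i _; rewrite expr0n.
by rewrite expn_eq0.
Qed.

Lemma Tr1 {F : finFieldType} {m} : #|F| = (2 ^ m)%N -> odd m -> absTr m (1 : F) = 1.
Proof.
move=> h ho; rewrite /absTr (eq_bigr (fun _ => 1)) => [|i _]; last by rewrite expr1n.
rewrite sumr_const card_ord -[m]odd_double_half ho -mul2n natrD natrM (two0 m h) mul0r addr0.
by [].
Qed.

Lemma TrSq {F : finFieldType} m (x : F) : #|F| = (2 ^ m)%N -> (0 < m)%N ->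
  absTr m (x ^+ 2) = absTr m x.
Proof.
move=> h hm; rewrite /absTr; case: m hm h => // m _ h.
rewrite big_ord_recr big_ord_recl /= -exprM -expnS.
have -> : x ^+ (2 ^ m.+1) = x by rewrite -[m.+1]muln1 fixm.
rewrite expn0 expr1 addrC; congr (_ + _).
by apply: eq_bigr => i _; rewrite -exprM -expnS /bump /= add1n.
Qed.

Lemma TrP {F : finFieldType} {m} j (x : F) : #|F| = (2 ^ m)%N -> (0 < m)%N ->
  absTr m (x ^+ (2 ^ j)) = absTr m x.
Proof.
move=> h hm; elim: j => [|j IH]; first by rewrite expr1.
by rewrite expnSr exprM TrSq.
Qed.

Lemma TrNZ {F : finFieldType} {m} : #|F| = (2 ^ m)%N -> (0 < m)%N ->
  exists y : F, absTr m y != 0.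
Proof.
case: m => // m h _; apply/existsP; apply: contraT; rewrite negb_exists => /forallP H.
pose P : {poly F} := \sum_(i < m.+1) 'X^(2 ^ i).
have PE y : P.[y] = absTr m.+1 y.
  by rewrite /P horner_sum; apply: eq_bigr => i _; rewrite hornerXn.
have Pnz : P != 0.
  apply/eqP => /(congr1 (fun p : {poly F} => p`_(2 ^ m))).
  rewrite coef_sum coef0 (bigD1 ord_max) //= coefXn eqxx big1 ?addr0.
    by move/eqP; rewrite oner_eq0.
  move=> i /eqP ne; rewrite coefXn eqn_exp2l //.
  by case: eqP => // e; case: ne; apply: val_inj; rewrite /= -e.
have szP : (size P <= (2 ^ m).+1)%N.
  apply: leq_trans (size_sum _ _ _) _.
  rewrite big_tnth; apply/bigmax_leqP => i _.
  rewrite size_polyXn ltnS leq_exp2l //.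
  by rewrite -ltnS ltn_ord.
have rt : all (root P) (enum F).
  by apply/allP => y _; rewrite /root PE; exact: negbNE (H y).
have := max_poly_roots Pnz rt (enum_uniq F).
rewrite -cardE h expnS => lt.
have := leq_trans lt szP.
have : (0 < 2 ^ m)%N by rewrite expn_gt0.
lia.
Qed.

Lemma c2eq {F : finFieldType} {m} (u v w : F) : #|F| = (2 ^ m)%N ->
  u = v + 2%:R * w -> u = v.
Proof. by move=> h ->; rewrite (two0 m h) mul0r addr0. Qed.

Lemma TrND {F : finFieldType} {m} (e : F) : #|F| = (2 ^ m)%N -> (0 < m)%N ->
  (forall y, absTr m (e * y) = 0) -> e = 0.
Proof.
move=> h hm H; apply/eqP; apply: contraT => ne.
have [y0 ny] := TrNZ h hm; move: ny.
by have := H (e^-1 * y0); rewrite mulrA mulfV // mul1r => ->; rewrite eqxx.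
Qed.

Lemma goldE {F : finFieldType} k (x : F) : gold k x = x * x ^+ (2 ^ k).
Proof. by rewrite /gold exprS. Qed.

Lemma Sid {F : finFieldType} {m} k (x a b : F) : #|F| = (2 ^ m)%N ->
  gold k x + gold k (x + a) + gold k (x + b) + gold k (x + a + b)
  = a ^+ (2 ^ k) * b + a * b ^+ (2 ^ k).
Proof.
move=> h; rewrite !goldE !(frobD _ _ _ _ h).
apply: (c2eq _ _ (2%:R * x ^+ (2 ^ k) * x + x ^+ (2 ^ k) * (a + b)
  + x * (a ^+ (2 ^ k) + b ^+ (2 ^ k)) + a ^+ (2 ^ k) * a + b ^+ (2 ^ k) * b) h).
ring.
Qed.

Lemma key {F : finFieldType} {m} k (c b : F) : #|F| = (2 ^ m)%N -> (0 < m)%N ->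
  coprime k m -> odd m -> b != 0 ->
  (forall x, absTr m (c * (gold k x + gold k (x + b))) = 0) -> c = 0.
Proof.
move=> h hm hc ho bn H; apply/eqP; apply: contraT => cn.
pose d := c * (b * b ^+ (2 ^ k)).
have dn : d != 0 by rewrite /d !mulf_neq0 // expf_neq0.
have H2 y : absTr m (d * y ^+ (2 ^ k)) + absTr m (d * y) + absTr m d = 0.
  rewrite -!(TrD _ _ h) -(H (b * y)); congr absTr.
  rewrite !goldE !(frobD _ _ _ _ h) exprMn.
  symmetry; apply: (c2eq _ _ (c * (b * y) * (b ^+ (2 ^ k) * y ^+ (2 ^ k))) h).
  rewrite /d; ring.
have Td : absTr m d = 0.
  have := H2 0; rewrite expr0n expn_eq0 /= !mulr0 Tr0 !add0r //.
pose j := (m.-1 * k)%N.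
have jk : (j + k = m * k)%N by rewrite /j addnC -mulSn prednK.
have H3 y : absTr m ((d ^+ (2 ^ j) + d) * y) = 0.
  rewrite mulrDl (TrD _ _ h) -[in absTr m (d ^+ _ * _)](fixm m k y h).
  rewrite -jk expnD mulnC exprM -exprMn (TrP _ _ h hm).
  by have := H2 y; rewrite Td addr0.
have e : d ^+ (2 ^ j) = d.
  have := TrND _ h hm H3; move/eqP; rewrite addr_eq0 => /eqP ->.
  by rewrite (oppr_pchar2 (ch2 m h)).
have dk : d ^+ (2 ^ k) = d.
  by rewrite -{1}e -exprM -expnD jk fixm.
have [d0|d1] := fix01 _ _ h hm hc dk; first by rewrite d0 eqxx in dn.
by move: Td; rewrite d1 (Tr1 h ho) => /eqP; rewrite oner_eq0.
Qed.

Theorem lemma3p11 (m k : nat) (F : finFieldType)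
  (hm : (0 < m)%N) (hk : (0 < k)%N) (hcop : coprime k m) (hodd : odd m)
  (hcard : #|F| = (2 ^ m)%N)
  (a1 a2 b1 b2 : F) :
  (forall x : F,
      gold k x + gold k (x + a2) + gold k (x + b2) + gold k (x + a2 + b2) = 0
   /\ absTr m (a1 * gold k (x + a2) + b1 * gold k (x + b2)
               + (a1 + b1) * gold k (x + a2 + b2)) = 0)
  <->
  ((a1, a2) = (0, 0) \/ (b1, b2) = (0, 0) \/ (a1, a2) = (b1, b2)
   \/ (a2 = 0 /\ b2 = 0)).
Proof.
have h := hcard.
have aa (x a : F) : x + a + a = x.
  by rewrite -addrA (addrr_pchar2 (ch2 m h)) addr0.
split.
- move=> H.
  have E : a2 ^+ (2 ^ k) * b2 + a2 * b2 ^+ (2 ^ k) = 0.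
    by rewrite -(Sid k 0 a2 b2 h); case: (H 0).
  have [a0|an] := eqVneq a2 0.
    have [b0|bn] := eqVneq b2 0; first by right; right; right.
    left; subst a2; congr pair.
    apply: (key k _ _ h hm hcop hodd bn) => x.
    case: (H x) => _; rewrite !addr0 => <-; congr absTr.
    symmetry; apply: (c2eq _ _ (b1 * gold k (x + b2)) h); ring.
  have [b0|bn] := eqVneq b2 0.
    right; left; subst b2; congr pair.
    apply: (key k _ _ h hm hcop hodd an) => x.
    case: (H x) => _; rewrite !addr0 => <-; congr absTr.
    symmetry; apply: (c2eq _ _ (a1 * gold k (x + a2)) h); ring.
  have ab : a2 = b2.
    pose z := a2 / b2.
    have zk : z ^+ (2 ^ k) = z.
      rewrite /z exprMn exprVn; apply/eqP; rewrite eqr_div ?expf_neq0 //.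
      apply/eqP; move/eqP: E; rewrite addr_eq0 (oppr_pchar2 (ch2 m h)).
      by move/eqP ->; rewrite mulrC.
    have [z0|z1] := fix01 _ _ h hm hcop zk.
      by move/eqP: z0; rewrite /z mulf_eq0 invr_eq0 (negbTE an) (negbTE bn).
    exact: divr1_eq z1.
  right; right; left; subst b2; congr pair.
  apply/eqP; rewrite -subr_eq0 (oppr_pchar2 (ch2 m h)); apply/eqP.
  apply: (key k _ _ h hm hcop hodd an) => x.
  case: (H x) => _; rewrite aa => <-; congr absTr.
  ring.
- move=> HH x; split.
  + case: HH => [[e1 e2]|[[e1 e2]|[[e1 e2]|[e1 e2]]]]; subst; rewrite ?addr0 ?(aa x).
    * by apply: (c2eq _ _ (gold k x + gold k (x + b2)) h); ring.
    * by apply: (c2eq _ _ (gold k x + gold k (x + a2)) h); ring.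
    * by apply: (c2eq _ _ (gold k x + gold k (x + b2)) h); ring.
    * by apply: (c2eq _ _ (2%:R * gold k x) h); ring.
  + rewrite -(Tr0 m); congr absTr.
    case: HH => [[e1 e2]|[[e1 e2]|[[e1 e2]|[e1 e2]]]]; subst; rewrite ?addr0 ?(aa x).
    * by apply: (c2eq _ _ (b1 * gold k (x + b2)) h); ring.
    * by apply: (c2eq _ _ (a1 * gold k (x + a2)) h); ring.
    * by apply: (c2eq _ _ (b1 * gold k (x + b2) + b1 * gold k x) h); ring.
    * by apply: (c2eq _ _ ((a1 + b1) * gold k x) h); ring.
Qed.
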